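(* Let $r,s,t,u,v$ be non-negative integers with $u+v=4s-2r+t^2+2t+4$. Let $G=\left(r,\,r,\,s,\,s+\binom{t+1}{2},\,s+\binom{t+2}{2},\,u\right)$ and $H=\left(r,\,r,\,s,\,s+\binom{t+1}{2},\,s+\binom{t+2}{2},\,v\right)$, with interesting factors $g(x)$ and $h(x)$ respectively. Then $$g(x)=-h(-x+6s+2t^2+4t+6).$$
   Context: All graphs are finite and simple. For integers $1\le j\le k$, a $(j,k)$-biclique is a graph whose vertex set is the disjoint union of a $j$-clique and a $k$-clique, with an arbitrary set of additional edges each joining a vertex of the $j$-clique to a vertex of the $k$-clique. For non-negative integers $a,b,c,d,e,f$, the notation $(a,b,c,d,e,f)$ denotes the $(3,k)$-biclique with $k=a+b+c+d+e+f$, whose $3$-clique is $\{v_1,v_2,v_3\}$, in which every vertex of the $k$-clique is adjacent to exactly one or exactly two of $v_1,v_2,v_3$, and exactly $a$ (resp. $b$, $c$) vertices of the $k$-clique are adjacent to $v_1$ only (resp. $v_2$ only, $v_3$ only), and exactly $d$ (resp. $e$, $f$) vertices of the $k$-clique are adjacent to exactly $v_2$ and $v_3$ (resp. exactly $v_1$ and $v_3$, exactly $v_1$ and $v_2$). This determines the graph up to isomorphism. The interesting factor of a $(3,k)$-biclique $G$ is the cubic polynomial $P_G(x)/(x)_k$, where $P_G$ is the chromatic polynomial and $(x)_k=x(x-1)\cdots(x-k+1)$. *)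

(* Defs.v *)
From HB Require Import structures.
From mathcomp Require Import all_boot all_order all_algebra.
Set Implicit Arguments. Unset Strict Implicit. Unset Printing Implicit Defensive.
Import Order.TTheory GRing.Theory Num.Theory.

Definition ncol (T : finType) (e : rel T) (n : nat) : nat :=
  #|[set f : {ffun T -> 'I_n} | [forall x, forall y, e x y ==> (f x != f y)]]|.

Definition bk (a b c d e f : nat) : nat := a + b + c + d + e + f.

(* Vertex set: the 3-clique {v1,v2,v3} = inl 0, inl 1, inl 2, and the k-clique
   inr j, j < k. *)
Definition bvert (a b c d e f : nat) : finType := ('I_3 + 'I_(bk a b c d e f))%type.

(* The block of the k-clique vertex j:
   0 : adjacent to v1 only  (first a vertices)
   1 : v2 only (next b), 2 : v3 only (next c),
   3 : v2 and v3 (next d), 4 : v1 and v3 (next e), 5 : v1 and v2 (last f). *)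
Definition bcls (a b c d e : nat) (j : nat) : nat :=
  if j < a then 0 else if j < a + b then 1 else if j < a + b + c then 2
  else if j < a + b + c + d then 3 else if j < a + b + c + d + e then 4 else 5.

Definition badj (a b c d e : nat) (i : nat) (j : nat) : bool :=
  match bcls a b c d e j with
  | 0 => i == 0
  | 1 => i == 1
  | 2 => i == 2
  | 3 => i != 0
  | 4 => i != 1
  | _ => i != 2
  end.

Definition brel (a b c d e f : nat) : rel (bvert a b c d e f) :=
  fun x y =>
    match x, y with
    | inl i, inl i' => i != i'
    | inr j, inr j' => j != j'
    | inl i, inr j => badj a b c d e i j
    | inr j, inl i => badj a b c d e i j
    end.

(* p is the interesting factor of (a,b,c,d,e,f): P_G(x) = (x)_k * p(x), where
   P_G is the chromatic polynomial, i.e. P_G(n) = number of proper n-colourings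
   for every natural n (this determines p uniquely). *)
Definition interesting_factor (a b c d e f : nat) (p : {poly rat}) : Prop :=
  forall n : nat,
    ((\prod_(i < bk a b c d e f) (n%:R - i%:R)) * p.[n%:R] : rat)%R
    = ((ncol (@brel a b c d e f) n)%:R)%R.

(* Main.v *)
Require Import Defs.
From HB Require Import structures.
From mathcomp Require Import all_boot all_order all_algebra.
From Stdlib Require Import Ring Field.
Import Order.TTheory GRing.Theory Num.Theory.
Local Open Scope ring_scope.
Definition radd (x y : rat) : rat := x + y.
Definition rmul (x y : rat) : rat := x * y.
Definition ropp (x : rat) : rat := - x.
Definition rsub (x y : rat) : rat := radd x (ropp y).
Definition rinv (x : rat) : rat := x^-1.
Definition rdiv (x y : rat) : rat := rmul x (rinv y).
Definition rzero : rat := 0.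
Definition rone : rat := 1.
Lemma raddE (x y : rat) : x + y = radd x y. Proof. by []. Qed.
Lemma rmulE (x y : rat) : x * y = rmul x y. Proof. by []. Qed.
Lemma roppE (x : rat) : - x = ropp x. Proof. by []. Qed.
Lemma rinvE (x : rat) : x^-1 = rinv x. Proof. by []. Qed.
Lemma r0E : (0:rat) = rzero. Proof. by []. Qed.
Lemma r1E : (1:rat) = rone. Proof. by []. Qed.

Lemma rat_ring : @ring_theory rat rzero rone radd rmul rsub ropp eq.
Proof.
split; rewrite /radd /rmul /rsub /ropp /rzero /rone /radd.
exact: add0r. exact: addrC. exact: addrA. exact: mul1r. exact: mulrC. exact: mulrA. exact: mulrDl. done. exact: subrr.
Qed.
Lemma rat_field : @field_theory rat rzero rone radd rmul rsub ropp rdiv rinv eq.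
Proof.
split; [exact: rat_ring| by [] | done | ].
move=> p H; rewrite /rmul /rinv mulrC mulfV //; exact/eqP.
Qed.
Add Field ratField : rat_field.
Definition rnat (n : nat) : rat := n%:R.
Lemma rnatE (n : nat) : (n%:R : rat) = rnat n. Proof. by []. Qed.
Lemma r2E : (2%:R : rat) = 1 + 1. Proof. by []. Qed.
Ltac rprep := rewrite ?r2E ?rnatE ?raddE ?rmulE ?roppE ?rinvE ?r1E; match goal with |- ?a = ?b => change (@eq rat a b) end.

Lemma sum_neq {I : finType} (x : I) (D : I -> rat) :
  \sum_z (if z != x then D z else 0) = \sum_z D z - D x.
Proof.
rewrite -big_mkcond /= [in RHS](bigD1 x) //= addrAC subrr add0r.
by [].
Qed.

Lemma triple_sum (I : finType) (A B C : I -> rat) :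
  \sum_x \sum_y \sum_z (if [&& x != y, x != z & y != z] then A x * B y * C z else 0)
  = (\sum_x A x) * (\sum_x B x) * (\sum_x C x)
    - (\sum_x A x) * (\sum_x B x * C x)
    - (\sum_x B x) * (\sum_x A x * C x)
    - (\sum_x C x) * (\sum_x A x * B x)
    + 2%:R * (\sum_x A x * B x * C x).
Proof.
set SA := \sum_x A x; set SB := \sum_x B x; set SC := \sum_x C x.
set SBC := \sum_x B x * C x; set SAC := \sum_x A x * C x; set SAB := \sum_x A x * B x.
set SABC := \sum_x A x * B x * C x.
have E1 : forall x y, \sum_z (if [&& x != y, x != z & y != z] then A x * B y * C z else 0)
   = if y != x then A x * B y * (SC - C x - C y) else 0.
  move=> x y; case: (boolP (y != x)) => nyx /=.
    have nxy : x != y by rewrite eq_sym.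
    have -> : SC - C x - C y = \sum_z (if z != x then (if z != y then C z else 0) else 0).
      by rewrite (sum_neq x (fun z => if z != y then C z else 0)) (sum_neq y C) /= nxy addrAC.
    rewrite mulr_sumr; apply: eq_bigr => z _; rewrite nxy /= (eq_sym x z) (eq_sym y z).
    by case: (z != x); case: (z != y); rewrite /= ?mulr0.
  move/negPn/eqP: nyx => ->; rewrite big1 // => z _; by rewrite eqxx.
have E2 : forall x, \sum_y \sum_z (if [&& x != y, x != z & y != z] then A x * B y * C z else 0)
   = A x * (SB * SC - SB * C x - SBC - B x * SC + 2%:R * (B x * C x)).
  move=> x; under eq_bigr => y _ do rewrite E1.
  rewrite (sum_neq x (fun y => A x * B y * (SC - C x - C y))) /=.
  have -> : \sum_y A x * B y * (SC - C x - C y) = A x * (SB * SC - SB * C x - SBC).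
    rewrite /SB /SBC mulr_suml mulr_suml -!sumrB mulr_sumr; apply: eq_bigr => y _.
    rprep; ring.
  rprep; ring.
under eq_bigr => x _ do rewrite E2.
have -> : \sum_x A x * (SB * SC - SB * C x - SBC - B x * SC + 2%:R * (B x * C x))
  = \sum_x (A x * (SB * SC) - A x * SBC - A x * C x * SB - A x * B x * SC + 2%:R * (A x * B x * C x)).
  apply: eq_bigr => x _; rprep; ring.
rewrite big_split /= !sumrB -!mulr_suml -mulr_sumr.
rewrite /SA /SB /SC /SBC /SAC /SAB /SABC.
set X1 := \sum_i A i; set X2 := \sum_i B i; set X3 := \sum_i C i.
set X4 := \sum_i B i * C i; set X5 := \sum_i A i * C i; set X6 := \sum_i A i * B i.
set X7 := \sum_i A i * B i * C i.
rprep; ring.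
Qed.
From Stdlib Require Import Lia.
Local Open Scope nat_scope.
Ltac natlia := repeat match goal with
 | H : is_true (_ < _)%N |- _ => move/ssrnat.ltP: H => H
 | H : is_true (_ <= _)%N |- _ => move/ssrnat.leP: H => H
 | H : (_ < _)%N = true |- _ => move/ssrnat.ltP: H => H
 | H : (_ < _)%N = false |- _ => move/negbT: H; rewrite -leqNgt => /ssrnat.leP H
 end; unfold addn, addn_rec in *; lia.

Lemma seg (m l : nat) (F : nat -> nat) (c : nat) :
  (forall j, (m <= j < m + l)%N -> F j = c) -> (\sum_(m <= j < m + l) F j = l * c)%N.
Proof. by move=> H; rewrite (eq_big_nat _ _ H) sum_nat_const_nat addKn. Qed.

Ltac bsolve := move=> j /andP[h1 h2];
  match goal with |- context[bcls ?a ?b ?c ?d ?e ?j] => match goal with |- _ = nat_of_bool (?P ?k) =>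
   suff -> : bcls a b c d e j = k by case: (P k) end end;
  rewrite /bcls; repeat (case: ifP => ?); try done; exfalso; natlia.

Lemma card_cls a b c d e f (P : nat -> bool) :
  #|[pred j : 'I_(bk a b c d e f) | P (bcls a b c d e j)]| =
  (P 0 * a + P 1 * b + P 2 * c + P 3 * d + P 4 * e + P 5 * f)%N.
Proof.
rewrite -sum1_card big_mkcond /=.
rewrite -(big_mkord xpredT (fun j => if P (bcls a b c d e j) then 1%N else 0%N)) /bk.
rewrite (@big_cat_nat _ _ _ (a+b+c+d+e)) ?leq_addr //=.
rewrite (@big_cat_nat _ _ _ (a+b+c+d)) ?leq_addr //=.
rewrite (@big_cat_nat _ _ _ (a+b+c)) ?leq_addr //=.
rewrite (@big_cat_nat _ _ _ (a+b)) ?leq_addr //=.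
rewrite (@big_cat_nat _ _ _ a) ?leq_addr //=.
rewrite -{1}[a]add0n.
rewrite (seg _ _ _ (P 0)); last by bsolve.
rewrite (seg _ _ _ (P 1)); last by bsolve.
rewrite (seg _ _ _ (P 2)); last by bsolve.
rewrite (seg _ _ _ (P 3)); last by bsolve.
rewrite (seg _ _ _ (P 4)); last by bsolve.
rewrite (seg _ _ _ (P 5)); last by bsolve.
by rewrite !(mulnC _ (nat_of_bool _)).
Qed.
Local Open Scope ring_scope.

Lemma card_set_sum (T : finType) (P : pred T) :
  (#|[set x | P x]|%:R : rat) = \sum_x (if P x then 1 else 0).
Proof.
rewrite cardsE -sum1_card natr_sum big_mkcond /=.
by apply: eq_bigr => x _; rewrite unfold_in; case: (P x).
Qed.

Lemma natr_ffact n k : ((n ^_ k)%:R : rat) = \prod_(i < k) (n%:R - i%:R).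
Proof.
elim: k => [|k IH]; first by rewrite ffactn0 big_ord0.
rewrite ffactnSr natrM big_ord_recr /= -IH.
case: (leqP k n) => h; first by rewrite natrB.
by rewrite ffact_small // !mul0r.
Qed.

Lemma poly_eq_nat (p q : {poly rat}) N :
  (forall n, (N <= n)%N -> p.[n%:R] = q.[n%:R]) -> p = q.
Proof.
move=> H; apply/eqP; rewrite -subr_eq0; apply/negPn/negP => nz.
suff : (size [seq (((N + i)%N)%:R : rat) | i <- iota 0 (size (p - q)%R)] < size (p - q)%R)%N.
  by rewrite size_map size_iota ltnn.
apply: (max_poly_roots nz).
  apply/allP => x /mapP [i _ ->]; by rewrite /root hornerD hornerN H ?leq_addr // subrr.
rewrite map_inj_uniq ?iota_uniq // => i j /eqP; rewrite eqr_nat eqn_add2l => /eqP.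
done.
Qed.

Lemma forall_or (T : finType) (P Q R : pred T) :
  [forall j, (P j || Q j) ==> R j] = [forall j, P j ==> R j] && [forall j, Q j ==> R j].
Proof.
apply/forallP/andP => [H|[/forallP H1 /forallP H2] j].
  by split; apply/forallP => j; apply/implyP => Pj; apply: (implyP (H j)); rewrite Pj ?orbT.
by apply/implyP; case/orP => [Pj|Qj]; [exact: (implyP (H1 j)) | exact: (implyP (H2 j))].
Qed.

Lemma sum_avoid n k (fr : {ffun 'I_k -> 'I_n}) (P : pred 'I_k) : injective fr ->
  \sum_(x : 'I_n) (if [forall j, P j ==> (x != fr j)] then 1 else 0 : rat) = n%:R - #|P|%:R.
Proof.
move=> inj.
rewrite -(card_set_sum _ (fun x => [forall j, P j ==> (x != fr j)])).
set A := [set fr j | j in P].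
have -> : [set x | [forall j, P j ==> (x != fr j)]] = ~: A.
  apply/setP => x; rewrite !inE; apply/idP/idP.
    move/forallP=> H; apply/imsetP => [[j Pj Ex]]; by move: (H j) => /implyP /(_ Pj); rewrite Ex eqxx.
  move=> nA; apply/forallP=> j; apply/implyP=> Pj; apply: contra nA => /eqP ->.
  exact: imset_f.
have H := cardsC A; rewrite card_ord in H.
have -> : (n%:R : rat) = (#|A| + #|~: A|)%:R by rewrite H.
by rewrite card_imset // natrD addrAC subrr add0r.
Qed.

Lemma forall_I3 (Q : pred 'I_3) :
  [forall i, Q i] = [&& Q ord0, Q (@Ordinal 3 1 isT) & Q (@Ordinal 3 2 isT)].
Proof.
apply/forallP/and3P => [H|[H0 H1 H2] [[|[|[|i]]] Hi]]; first by split; apply: H.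
- by rewrite (_ : Ordinal Hi = ord0) //; apply: val_inj.
- by rewrite (_ : Ordinal Hi = @Ordinal 3 1 isT) //; apply: val_inj.
- by rewrite (_ : Ordinal Hi = @Ordinal 3 2 isT) //; apply: val_inj.
- by [].
Qed.

Definition Qpoly (a b c d e f : nat) : {poly rat} :=
  ('X - (a+e+f)%:R%:P) * ('X - (b+d+f)%:R%:P) * ('X - (c+d+e)%:R%:P)
  - ('X - (a+e+f)%:R%:P) * ('X - (b+c+d+e+f)%:R%:P)
  - ('X - (b+d+f)%:R%:P) * ('X - (a+c+d+e+f)%:R%:P)
  - ('X - (c+d+e)%:R%:P) * ('X - (a+b+d+e+f)%:R%:P)
  + 2%:R%:P * ('X - (bk a b c d e f)%:R%:P).

Definition badjm (i m : nat) : bool :=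
  match m with
  | 0 => i == 0
  | 1 => i == 1
  | 2 => i == 2
  | 3 => i != 0
  | 4 => i != 1
  | _ => i != 2
  end.

Section Count.
Variables (a b c d e f n : nat).
Local Notation k := (bk a b c d e f).
Local Notation T := (bvert a b c d e f).

Definition join (fl : {ffun 'I_3 -> 'I_n}) (fr : {ffun 'I_k -> 'I_n}) : {ffun T -> 'I_n} :=
  [ffun x : T => match x with inl i => fl i | inr j => fr j end].

Definition tri_ok (fl : {ffun 'I_3 -> 'I_n}) :=
  [forall i, forall i', (i != i') ==> (fl i != fl i')].
Definition avoid (fl : {ffun 'I_3 -> 'I_n}) (fr : {ffun 'I_k -> 'I_n}) :=
  [forall i : 'I_3, forall j : 'I_k, badj a b c d e i j ==> (fl i != fr j)].

Lemma proper_join fl fr :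
  [forall x, forall y, @brel a b c d e f x y ==> (join fl fr x != join fl fr y)]
  = [&& tri_ok fl, injectiveb fr & avoid fl fr].
Proof.
apply/idP/idP.
- move/forallP=> H.
  have H' : forall x y, @brel a b c d e f x y -> join fl fr x != join fl fr y.
    by move=> x y; apply/implyP; have := forallP (H x) y.
  apply/and3P; split.
  + apply/forallP=> i; apply/forallP=> i'; apply/implyP=> ne.
    by have := H' (inl i) (inl i') ne; rewrite !ffunE.
  + apply/injectiveP=> j j' E; apply/eqP; apply/negPn/negP=> ne.
    by have := H' (inr j) (inr j') ne; rewrite !ffunE /= E eqxx.
  + apply/forallP=> i; apply/forallP=> j; apply/implyP=> adj.
    by have := H' (inl i) (inr j) adj; rewrite !ffunE.
- case/and3P=> /forallP Ht /injectiveP Hi /forallP Ha.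
  apply/forallP=> [[i|j]]; apply/forallP=> [[i'|j']]; rewrite /= !ffunE /=.
  + exact: (forallP (Ht i) i').
  + exact: (forallP (Ha i) j').
  + apply/implyP=> adj; rewrite eq_sym; exact: (implyP (forallP (Ha i') j) adj).
  + apply/implyP=> ne; apply: contra ne => /eqP E; apply/eqP; exact: Hi.
Qed.

Definition Av (fr : {ffun 'I_k -> 'I_n}) (P : pred 'I_k) (x : 'I_n) : rat :=
  if [forall j, P j ==> (x != fr j)] then 1 else 0.

Lemma Av_mul fr P Q x : Av fr P x * Av fr Q x = Av fr (predU P Q) x.
Proof.
rewrite /Av (forall_or _ P Q (fun j => x != fr j)).
by case: [forall j, _]; case: [forall j, _]; rewrite /= ?mulr1 ?mulr0.
Qed.

Lemma sum_Av (fr : {ffun 'I_k -> 'I_n}) (P : pred 'I_k) : injective fr -> \sum_x Av fr P x = n%:R - #|P|%:R.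
Proof. exact: sum_avoid. Qed.


Definition e3 (p : ('I_n * 'I_n) * 'I_n) : {ffun 'I_3 -> 'I_n} :=
  [ffun i : 'I_3 => if val i == 0%N then p.1.1 else if val i == 1%N then p.1.2 else p.2].

Lemma e3_bij : bijective e3.
Proof.
exists (fun g : {ffun 'I_3 -> 'I_n} => ((g ord0, g (@Ordinal 3 1 isT)), g (@Ordinal 3 2 isT))).
  by move=> [[x y] z]; rewrite /e3 !ffunE.
move=> g; apply/ffunP => -[[|[|[|i]]] Hi]; rewrite !ffunE //=; congr (g _); exact: val_inj.
Qed.

Lemma inner_sum (fr : {ffun 'I_k -> 'I_n}) :
  \sum_(fl : {ffun 'I_3 -> 'I_n}) (if tri_ok fl && avoid fl fr then 1 else 0 : rat)
  = \sum_x \sum_y \sum_z (if [&& x != y, x != z & y != z] then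
       Av fr (fun j => badj a b c d e 0 j) x * Av fr (fun j => badj a b c d e 1 j) y
       * Av fr (fun j => badj a b c d e 2 j) z else 0).
Proof.
rewrite (reindex e3) /=; last exact: onW_bij e3_bij.
rewrite pair_bigA pair_bigA /=; apply: eq_bigr => -[[x y] z] _ /=.
rewrite /tri_ok /avoid !forall_I3 /= /e3 !ffunE /=.
have -> : [&& (x != y) && (x != z), (y != x) && (y != z), z != x, z != y & true]
   = [&& x != y, x != z & y != z].
  by rewrite (eq_sym y x) (eq_sym z x) (eq_sym z y) andbT; case: (x != y); case: (x != z); case: (y != z).
case: [&& x != y, x != z & y != z]; last by [].
rewrite /Av /=.
by case: [forall j, _]; case: [forall j, _]; case: [forall j, _]; rewrite /= ?mulr1 ?mulr0.
Qed.

Lemma card_badj (Pm : nat -> bool) (Q : pred 'I_k) :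
  (forall j, Q j = Pm (bcls a b c d e j)) ->
  #|Q| = (Pm 0 * a + Pm 1 * b + Pm 2 * c + Pm 3 * d + Pm 4 * e + Pm 5 * f)%N.
Proof.
move=> H; rewrite -(card_cls a b c d e f Pm); apply: eq_card => j.
by rewrite inE -H.
Qed.

Lemma sum_Av2 (fr : {ffun 'I_k -> 'I_n}) (P Q : pred 'I_k) : injective fr ->
  \sum_x (Av fr P x * Av fr Q x) = n%:R - #|predU P Q|%:R.
Proof. move=> inj; rewrite -(sum_Av _ _ inj); apply: eq_bigr => x _; exact: Av_mul. Qed.

Lemma sum_Av3 (fr : {ffun 'I_k -> 'I_n}) (P Q R : pred 'I_k) : injective fr ->
  \sum_x (Av fr P x * Av fr Q x * Av fr R x) = n%:R - #|predU (predU P Q) R|%:R.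
Proof. move=> inj; rewrite -(sum_Av _ _ inj); apply: eq_bigr => x _; by rewrite !Av_mul. Qed.

Lemma inner_val (fr : {ffun 'I_k -> 'I_n}) : injective fr ->
  \sum_(fl : {ffun 'I_3 -> 'I_n}) (if tri_ok fl && avoid fl fr then 1 else 0 : rat)
  = (Qpoly a b c d e f).[n%:R].
Proof.
move=> inj; rewrite inner_sum triple_sum !sum_Av3 // !sum_Av2 // !sum_Av //.
pose B i := fun j : 'I_k => badj a b c d e i j.
rewrite (card_badj (fun m => badjm 0 m || badjm 1 m || badjm 2 m) (predU (predU (B 0%N) (B 1%N)) (B 2%N))); last by move=> j.
rewrite (card_badj (fun m => badjm 0 m || badjm 1 m) (predU (B 0%N) (B 1%N))); last by move=> j.
rewrite (card_badj (fun m => badjm 0 m || badjm 2 m) (predU (B 0%N) (B 2%N))); last by move=> j.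
rewrite (card_badj (fun m => badjm 1 m || badjm 2 m) (predU (B 1%N) (B 2%N))); last by move=> j.
rewrite (card_badj (fun m => badjm 0 m) (B 0%N)); last by move=> j.
rewrite (card_badj (fun m => badjm 1 m) (B 1%N)); last by move=> j.
rewrite (card_badj (fun m => badjm 2 m) (B 2%N)); last by move=> j.
rewrite /= !mul1n !mul0n !add0n !addn0 /Qpoly /bk !hornerE.
by [].
Qed.

Lemma count_main :
  ((ncol (@brel a b c d e f) n)%:R : rat) = (n ^_ k)%:R * (Qpoly a b c d e f).[n%:R].
Proof.
rewrite /ncol card_set_sum.
rewrite (reindex (fun p : {ffun 'I_3 -> 'I_n} * {ffun 'I_k -> 'I_n} => join p.1 p.2)) /=; last first.
  apply: onW_bij; exists (fun g : {ffun T -> 'I_n} => ([ffun i => g (inl i)], [ffun j => g (inr j)])).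
    by move=> [fl fr] /=; congr pair; apply/ffunP => i; rewrite !ffunE.
  by move=> g; apply/ffunP => -[i|j]; rewrite !ffunE.
rewrite -(pair_bigA _ (fun fl fr => if [forall x, forall y, @brel a b c d e f x y ==> (join fl fr x != join fl fr y)] then (1 : rat) else 0)) /=.
rewrite exchange_big /=.
rewrite (eq_bigr (fun fr : {ffun 'I_k -> 'I_n} => if injectiveb fr then (Qpoly a b c d e f).[n%:R] else 0)); last first.
  move=> fr _; case: (boolP (injectiveb fr)) => [inj|ninj].
    rewrite -(@inner_val fr (injectiveP _ inj)); apply: eq_bigr => fl _.
    by rewrite proper_join inj.
  by rewrite big1 // => fl _; rewrite proper_join (negbTE ninj) andbF.
have -> : \sum_(fr : {ffun 'I_k -> 'I_n}) (if injectiveb fr then (Qpoly a b c d e f).[n%:R] else 0)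
    = (\sum_(fr : {ffun 'I_k -> 'I_n}) (if injectiveb fr then 1 else 0)) * (Qpoly a b c d e f).[n%:R].
  by rewrite mulr_suml; apply: eq_bigr => fr _; case: injectiveb; rewrite ?mul1r ?mul0r.
by rewrite -(card_set_sum _ (fun fr : {ffun 'I_k -> 'I_n} => injectiveb fr)) card_inj_ffuns !card_ord.
Qed.

End Count.

Lemma factor_eq {a b c d e f} {p : {poly rat}} :
  interesting_factor a b c d e f p -> p = Qpoly a b c d e f.
Proof.
move=> H; apply: (@poly_eq_nat _ _ (bk a b c d e f)) => n hn.
have := H n; rewrite count_main -natr_ffact => E.
apply: (mulfI _ E); by rewrite pnatr_eq0 -lt0n ffact_gt0.
Qed.

Lemma bin2_mul t : ('C(t.+1, 2) * 2 = t.+1 * t)%N.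
Proof.
elim: t => [|t IH] //.
rewrite binS bin1 mulnDl IH.
unfold addn, addn_rec, muln, muln_rec in *. nia.
Qed.

Lemma r4E : (4%:R : rat) = 1 + 1 + 1 + 1. Proof. by []. Qed.
Lemma r6E : (6%:R : rat) = 1 + 1 + 1 + 1 + 1 + 1. Proof. by []. Qed.

Theorem mainTheorem9 (r s t u v : nat) (g h : {poly rat})
  (huv : (u + v + 2 * r = 4 * s + t ^ 2 + 2 * t + 4)%N)
  (hg : interesting_factor r r s (s + 'C(t.+1, 2)) (s + 'C(t.+2, 2)) u g)
  (hh : interesting_factor r r s (s + 'C(t.+1, 2)) (s + 'C(t.+2, 2)) v h) :
  g = - (h \Po (- 'X + ((6 * s + 2 * t ^ 2 + 4 * t + 6)%N)%:R%:P)).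
Proof.
rewrite (factor_eq hg) (factor_eq hh).
apply: (@poly_eq_nat _ _ 0) => m _.
have hT2 : 'C(t.+2, 2) = ('C(t.+1, 2) + t.+1)%N by rewrite binS bin1.
have hT : ('C(t.+1, 2)%:R : rat) = (t%:R + 1) * t%:R / 2%:R.
  by rewrite -[LHS](@mulfK _ 2%:R) // -natrM bin2_mul natrM natr1.
have hu : (u%:R : rat) = (4 * s + t ^ 2 + 2 * t + 4)%N%:R - v%:R - (2 * r)%N%:R.
  by rewrite -huv !natrD; rprep; ring.
rewrite hT2; set T1 := 'C(t.+1, 2) in hT *; clearbody T1.
rewrite hornerN horner_comp /Qpoly /bk !(hornerD, hornerN, hornerM, hornerX, hornerC).
rewrite !natrD ?natrM ?natrX hu !natrD ?natrM ?natrX hT -[t.+1%:R]natr1.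
rewrite ?r4E ?r6E ?mulr0n ?addr0; rprep.
field.
by rewrite /rzero => /eqP.
Qed.
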